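(* Let $N\ge3$, $\mu\ge0$, assume (K0) and (F0), and let $p>p_S(\alpha)$. Let $t_1\in\mathbb{R}$ and let $w\in C^2(-\infty,t_1)$ be a positive solution of $$w''+aw'-A^{p-1}w+L(t)w^p+\mu g(t)=0\quad (t<t_1)$$ satisfying $0<\limsup_{t\to-\infty}w(t)<\infty$. Then $\lim_{t\to-\infty}w(t)=\gamma$.
   Context: (K0): $K:(0,\infty)\to(0,\infty)$ is continuous and $K(r)=(k_0+o(1))r^{\alpha}$ as $r\to0$ for some $\alpha>-2$, $k_0>0$. (F0): $f:(0,\infty)\to[0,\infty)$ is continuous, not identically zero, and $f(r)=O(r^{\nu})$ as $r\to0$ for some $\nu>-2$. $p_S(\alpha)=\frac{N+2+2\alpha}{N-2}$, $\theta:=\frac{2+\alpha}{p-1}$, $a:=N-2-2\theta$, $c:=N-2-\theta$, $A:=(\theta c)^{1/(p-1)}$, $\gamma:=k_0^{-1/(p-1)}A$, $L(t):=e^{-\alpha t}K(e^t)$, $g(t):=e^{(2+\theta)t}f(e^t)$. (This equation is what $w(t)=e^{\theta t}u(e^t)$ satisfies when $u$ solves $u''+\frac{N-1}{r}u'+K(r)u^p+\mu f(r)=0$.) *)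

(* Defs.v *)
From Stdlib Require Import Reals.
From Coquelicot Require Import Coquelicot.
Open Scope R_scope.

Definition pS (N : nat) (alpha : R) : R := (INR N + 2 + 2 * alpha) / (INR N - 2).
Definition theta (alpha p : R) : R := (2 + alpha) / (p - 1).
Definition acoef (N : nat) (alpha p : R) : R := INR N - 2 - 2 * theta alpha p.
Definition ccoef (N : nat) (alpha p : R) : R := INR N - 2 - theta alpha p.
Definition Acoef (N : nat) (alpha p : R) : R :=
  Rpower (theta alpha p * ccoef N alpha p) (1 / (p - 1)).
Definition gammacoef (N : nat) (alpha p k0 : R) : R :=
  Rpower k0 (- (1 / (p - 1))) * Acoef N alpha p.
Definition Lfun (K : R -> R) (alpha : R) (t : R) : R := exp (- alpha * t) * K (exp t).
Definition gfun (f : R -> R) (alpha p : R) (t : R) : R :=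
  exp ((2 + theta alpha p) * t) * f (exp t).

Definition limsup_minfty (w : R -> R) (t1 : R) : Rbar :=
  Glb_Rbar (fun y => exists T, T < t1 /\
              y = Lub_Rbar (fun z => exists t, t < T /\ z = w t)).

(* Main.v *)
Require Import Defs.
From Stdlib Require Import Reals Lra Psatz Classical.
From Coquelicot Require Import Coquelicot.
Open Scope R_scope.

Lemma cont_eps (f : R -> R) x : continuous f x ->
  forall eps, 0 < eps -> exists d, 0 < d /\ forall y, Rabs (y - x) < d -> Rabs (f y - f x) < eps.
Proof.
  intros H eps Heps.
  assert (Hl : locally (f x) (fun z => Rabs (z - f x) < eps)).
  { exists (mkposreal eps Heps). intros z Hz. exact Hz. }
  destruct (H _ Hl) as [d Hd].
  exists d. split. apply cond_pos. intros y Hy. apply Hd. exact Hy.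
Qed.

Lemma mono_nonpos (f df : R -> R) s t : s <= t ->
  (forall x, s <= x <= t -> is_derive f x (df x)) ->
  (forall x, s <= x <= t -> df x <= 0) -> f t <= f s.
Proof.
  intros Hst Hd Hn.
  destruct (MVT_gen f s t df) as [c [Hc Heq]].
  - intros x Hx. rewrite Rmin_left in Hx by lra. rewrite Rmax_right in Hx by lra.
    apply Hd; lra.
  - intros x Hx. rewrite Rmin_left in Hx by lra. rewrite Rmax_right in Hx by lra.
    apply continuity_pt_filterlim. apply (ex_derive_continuous f x).
    exists (df x). apply Hd; lra.
  - rewrite Rmin_left in Hc by lra. rewrite Rmax_right in Hc by lra.
    assert (df c <= 0) by (apply Hn; lra).
    assert (df c * (t - s) <= 0). { apply Rmult_le_0_r; lra. }
    lra.
Qed.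

Lemma Deq (f : R -> R) x l : is_derive f x l -> Derive (fun y => f y) x = l.
Proof. intros H. apply is_derive_unique. exact H. Qed.

Ltac rwD f x l H := first [rewrite (Deq f x l) by H | rewrite (is_derive_unique f x l) by H].

Lemma first_hit (f : R -> R) u v B : u <= v ->
  (forall x, u <= x <= v -> continuous f x) -> f u < B -> B <= f v ->
  exists t, u < t <= v /\ f t = B /\ forall x, u <= x < t -> f x < B.
Proof.
  intros Huv Hc Hu Hv.
  set (E := fun x => u <= x <= v /\ forall y, u <= y <= x -> f y < B).
  assert (HEb : bound E). { exists v. intros x [Hx _]. lra. }
  assert (HEu : E u). { split. lra. intros y Hy. replace y with u by lra. exact Hu. }
  destruct (completeness E HEb (ex_intro _ u HEu)) as [m [Hub Hlub]].
  assert (Hmu : u <= m) by (apply Hub; exact HEu).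
  assert (Hmv : m <= v). { apply Hlub. intros x [Hx _]. lra. }
  assert (Huv' : u < v). { destruct (Rle_lt_or_eq_dec u v Huv) as [h|h]; auto. subst. lra. }
  assert (C1 : forall x, u <= x < m -> f x < B).
  { intros x Hx.
    assert (exists e, E e /\ x < e) as [e [[He1 He2] Hxe]].
    { apply NNPP. intro Hn. assert (m <= x). { apply Hlub. intros e He.
        destruct (Rle_or_lt e x) as [h|h]; auto. exfalso. apply Hn. exists e. auto. }
      lra. }
    apply He2. lra. }
  assert (Cu : u < m).
  { destruct (cont_eps f u (Hc u ltac:(lra)) (B - f u) ltac:(lra)) as [d [Hd Hd']].
    set (x := Rmin (u + d/2) v).
    assert (E x).
    { unfold x. split. split. apply Rmin_glb; lra. apply Rmin_r.
      intros y Hy. assert (y <= u + d/2) by (pose proof (Rmin_l (u+d/2) v); lra).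
      assert (Rabs (y - u) < d) by (rewrite Rabs_right; lra).
      specialize (Hd' y H0). apply Rabs_lt_between in Hd'. lra. }
    assert (x <= m) by (apply Hub; auto).
    assert (u < x). { unfold x. apply Rmin_glb_lt; lra. }
    lra. }
  exists m. split. lra. split; [|exact C1].
  destruct (Rtotal_order (f m) B) as [Hlt|[Heq|Hgt]]; auto.
  - exfalso.
    assert (Hmv' : m < v). { destruct (Rle_lt_or_eq_dec m v Hmv) as [h|h]; auto. subst. lra. }
    destruct (cont_eps f m (Hc m ltac:(lra)) (B - f m) ltac:(lra)) as [d [Hd Hd']].
    set (x := Rmin (m + d/2) v).
    assert (E x).
    { unfold x. split. split. apply Rmin_glb; lra. apply Rmin_r.
      intros y Hy. destruct (Rlt_or_le y m) as [h|h]. apply C1; lra.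
      assert (y <= m + d/2) by (pose proof (Rmin_l (m+d/2) v); lra).
      assert (Rabs (y - m) < d) by (rewrite Rabs_right; lra).
      specialize (Hd' y H0). apply Rabs_lt_between in Hd'. lra. }
    assert (x <= m) by (apply Hub; auto).
    assert (m < x). { unfold x. apply Rmin_glb_lt; lra. }
    lra.
  - exfalso.
    destruct (cont_eps f m (Hc m ltac:(lra)) (f m - B) ltac:(lra)) as [d [Hd Hd']].
    set (y := Rmax u (m - d/2)).
    assert (u <= y) by apply Rmax_l.
    assert (y < m). { unfold y. apply Rmax_lub_lt; lra. }
    assert (m - d/2 <= y) by apply Rmax_r.
    assert (Rabs (y - m) < d) by (rewrite Rabs_left; lra).
    specialize (Hd' y H2). apply Rabs_lt_between in Hd'.
    specialize (C1 y ltac:(lra)). lra.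
Qed.

Lemma segment (f : R -> R) u v A B : u <= v -> A < B ->
  (forall x, u <= x <= v -> continuous f x) -> f u <= A -> B <= f v ->
  exists s t, u <= s /\ s < t /\ t <= v /\ f s = A /\ f t = B /\
    forall x, s <= x <= t -> A <= f x <= B.
Proof.
  intros Huv HAB Hc Hu Hv.
  destruct (first_hit f u v B Huv Hc ltac:(lra) Hv) as [t [Ht [HtB Hbel]]].
  set (g := fun x => - f (- x)).
  assert (Hgc : forall x, -t <= x <= -u -> continuous g x).
  { intros x Hx. unfold g.
    apply continuity_pt_filterlim.
    apply (continuity_pt_opp (fun x => f (- x))).
    apply (continuity_pt_comp (fun x => - x) f).
    apply continuity_pt_opp, derivable_continuous_pt, derivable_pt_id.
    apply continuity_pt_filterlim. apply Hc. lra. }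
  destruct (first_hit g (-t) (-u) (-A) ltac:(lra) Hgc) as [x [Hx [HxA Hgl]]].
  { unfold g. rewrite Ropp_involutive. lra. }
  { unfold g. rewrite Ropp_involutive. lra. }
  unfold g in HxA. exists (- x), t.
  split. lra. split. lra. split. lra. split. lra. split. auto.
  intros y Hy. split.
  - destruct (Rle_lt_or_eq_dec (-x) y ltac:(lra)) as [h|h].
    + specialize (Hgl (- y) ltac:(lra)). unfold g in Hgl. rewrite Ropp_involutive in Hgl. lra.
    + subst. lra.
  - destruct (Rle_lt_or_eq_dec y t ltac:(lra)) as [h|h].
    + specialize (Hbel y ltac:(lra)). lra.
    + subst. lra.
Qed.

Record setup (a Bc k0 p gam M : R) (w w1 w2 eps : R -> R) (T0 : R) : Prop := {
 s_a : 0 < a; s_B : 0 < Bc; s_k0 : 0 < k0; s_p : 1 < p; s_gam : 0 < gam;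
 s_gamB : k0 * Rpower gam (p-1) = Bc;
 s_M : 0 < M;
 s_w : forall t, t <= T0 -> 0 < w t <= M;
 s_d1 : forall t, t <= T0 -> is_derive w t (w1 t);
 s_d2 : forall t, t <= T0 -> is_derive w1 t (w2 t);
 s_ode : forall t, t <= T0 -> w2 t = - a * w1 t + Bc * w t - k0 * Rpower (w t) p + eps t;
 s_eps : forall d, 0 < d -> exists T, forall t, t <= T -> Rabs (eps t) <= d
}.

Lemma w1_bound a Bc k0 p gam M w w1 w2 eps T0 H T1 :
  setup a Bc k0 p gam M w w1 w2 eps T0 -> T1 <= T0 -> 0 <= H ->
  (forall t, t <= T1 -> Rabs (w2 t + a * w1 t) <= H) ->
  forall t, t <= T1 -> Rabs (w1 t) <= H / a.
Proof.
  intros S HT1 HH Hh t0 Ht0.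
  pose proof (s_a _ _ _ _ _ _ _ _ _ _ _ S) as Ha.
  assert (Hd1 := s_d1 _ _ _ _ _ _ _ _ _ _ _ S).
  assert (Hd2 := s_d2 _ _ _ _ _ _ _ _ _ _ _ S).
  assert (Hw := s_w _ _ _ _ _ _ _ _ _ _ _ S).
  pose proof (s_M _ _ _ _ _ _ _ _ _ _ _ S) as HM.
  assert (HaH : 0 <= H / a) by (apply Rdiv_le_0_compat; lra).
  apply Rabs_le. split; apply Rnot_lt_le; intro Hc.
  -
    set (c := - H / a - w1 t0).
    assert (Hcp : 0 < c) by (unfold c; unfold Rdiv in *; lra).
    assert (Hw1 : forall tau, tau <= t0 -> w1 tau <= - c).
    { intros tau Htau.
      set (phi := fun x => exp (a * x) * (w1 x + H / a)).
      assert (phi tau <= phi t0).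
      { enough (- phi t0 <= - phi tau) by lra.
        apply (mono_nonpos (fun x => - phi x) (fun x => - (exp (a*x) * (w2 x + a * w1 x + H)))). exact Htau.
        intros x Hx. unfold phi. auto_derive.
        exists (w2 x). apply Hd2. lra.
        rwD w1 x (w2 x) ltac:(apply Hd2; lra). field. lra.
        intros x Hx. assert (exp (a*x) > 0) by apply exp_pos.
        specialize (Hh x ltac:(lra)). apply Rabs_le_between in Hh.
        assert (0 <= exp (a*x) * (w2 x + a * w1 x + H)) by (apply Rmult_le_pos; lra). lra. }
      unfold phi in H0.
      assert (Ht0n : w1 t0 + H / a = - c) by (unfold c; field; lra).
      rewrite Ht0n in H0.
      assert (exp (a * tau) <= exp (a * t0)).
      { destruct (Rle_lt_or_eq_dec tau t0 Htau) as [h|h]. left. apply exp_increasing. nra. subst. lra. }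
      assert (exp (a * tau) > 0) by apply exp_pos.
      assert (w1 tau + H / a <= - c).
      { apply Rnot_lt_le. intro h. nra. }
      lra. }
    set (tau := t0 - (M + 1) / c).
    assert (Htau : tau <= t0). { unfold tau. assert (0 < (M+1)/c) by (apply Rdiv_lt_0_compat; lra). lra. }
    assert (q : c * t0 + w t0 <= c * tau + w tau).
    { apply (mono_nonpos (fun x => c * x + w x) (fun x => c + w1 x)). exact Htau.
      intros x Hx. auto_derive. exists (w1 x). apply Hd1. lra.
      rwD w x (w1 x) ltac:(apply Hd1; lra). ring.
      intros x Hx. specialize (Hw1 x ltac:(lra)). lra. }
    assert (w tau <= M) by (apply Hw; lra).
    assert (0 < w t0) by (apply Hw; lra).
    assert (c * (t0 - tau) = M + 1) by (unfold tau; field; lra).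
    nra.
  -
    set (c := w1 t0 - H / a).
    assert (Hcp : 0 < c) by (unfold c; lra).
    assert (Hw1 : forall tau, tau <= t0 -> c <= w1 tau).
    { intros tau Htau.
      set (phi := fun x => exp (a * x) * (w1 x - H / a)).
      assert (phi t0 <= phi tau).
      { apply (mono_nonpos phi (fun x => exp (a*x) * (w2 x + a * w1 x - H))). exact Htau.
        intros x Hx. unfold phi. auto_derive.
        exists (w2 x). apply Hd2. lra.
        rwD w1 x (w2 x) ltac:(apply Hd2; lra). field. lra.
        intros x Hx. assert (exp (a*x) > 0) by apply exp_pos.
        specialize (Hh x ltac:(lra)). apply Rabs_le_between in Hh.
        assert (0 <= exp (a*x) * (- (w2 x + a * w1 x - H))) by (apply Rmult_le_pos; lra). lra. }
      unfold phi in H0.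
      assert (Ht0n : w1 t0 - H / a = c) by (unfold c; lra).
      rewrite Ht0n in H0.
      assert (exp (a * tau) <= exp (a * t0)).
      { destruct (Rle_lt_or_eq_dec tau t0 Htau) as [h|h]. left. apply exp_increasing. nra. subst. lra. }
      assert (exp (a * tau) > 0) by apply exp_pos.
      assert (c <= w1 tau - H / a).
      { apply Rnot_lt_le. intro h. nra. }
      lra. }
    set (tau := t0 - (M + 1) / c).
    assert (Htau : tau <= t0). { unfold tau. assert (0 < (M+1)/c) by (apply Rdiv_lt_0_compat; lra). lra. }
    assert (q : c * t0 - w t0 <= c * tau - w tau).
    { apply (mono_nonpos (fun x => c * x - w x) (fun x => c - w1 x)). exact Htau.
      intros x Hx. auto_derive. exists (w1 x). apply Hd1. lra.
      rwD w x (w1 x) ltac:(apply Hd1; lra). ring.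
      intros x Hx. specialize (Hw1 x ltac:(lra)). lra. }
    assert (0 < w tau) by (apply Hw; lra).
    assert (w t0 <= M) by (apply Hw; lra).
    assert (c * (t0 - tau) = M + 1) by (unfold tau; field; lra).
    nra.
Qed.

Lemma derive_cont (F dF : R -> R) T : (forall t, t <= T -> is_derive F t (dF t)) ->
  forall x, x <= T -> continuous F x.
Proof. intros H x Hx. apply (ex_derive_continuous F x). exists (dF x). auto. Qed.

Lemma no_up (F dF : R -> R) T c1 c2 : c1 < c2 ->
  (forall t, t <= T -> is_derive F t (dF t)) ->
  (forall t, t <= T -> c1 <= F t <= c2 -> dF t <= 0) ->
  forall s t, s <= t -> t <= T -> F s <= c1 -> F t < c2.
Proof.
  intros Hc Hd Hn s t Hst HtT Hs. apply Rnot_le_lt. intro Ht.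
  destruct (segment F s t c1 c2 Hst Hc) as [s' [t' [H1 [H2 [H3 [H4 [H5 H6]]]]]]]; auto.
  intros x Hx. apply (derive_cont F dF T Hd). lra.
  assert (F t' <= F s').
  { apply (mono_nonpos F dF s' t'). lra. intros x Hx. apply Hd. lra.
    intros x Hx. apply Hn. lra. apply H6. lra. }
  lra.
Qed.

Lemma unbounded (F dF : R -> R) t0 KF k : 0 < k ->
  (forall t, t <= t0 -> is_derive F t (dF t)) ->
  (forall t, t <= t0 -> dF t <= - k) ->
  (forall t, t <= t0 -> Rabs (F t) <= KF) -> False.
Proof.
  intros Hk Hd Hn HB.
  assert (HK0 : 0 <= KF) by (specialize (HB t0 ltac:(lra)); pose proof (Rabs_pos (F t0)); lra).
  set (tau := t0 - (2 * KF + 1) / k).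
  assert (Hp : 0 < (2*KF+1)/k) by (apply Rdiv_lt_0_compat; lra).
  assert (Htau : tau <= t0) by (unfold tau; lra).
  assert (F t0 + k * t0 <= F tau + k * tau).
  { apply (mono_nonpos (fun x => F x + k * x) (fun x => dF x + k)). exact Htau.
    intros x Hx. auto_derive. exists (dF x). apply Hd. lra.
    rwD F x (dF x) ltac:(apply Hd; lra). ring.
    intros x Hx. specialize (Hn x ltac:(lra)). lra. }
  assert (k * (t0 - tau) = 2 * KF + 1) by (unfold tau; field; lra).
  specialize (HB t0 ltac:(lra)) as HB0. specialize (HB tau Htau).
  apply Rabs_le_between in HB0. apply Rabs_le_between in HB. nra.
Qed.

Lemma cauchy_F (F dF : R -> R) T1 KF Z : Z < 0 ->
  (forall t, t <= T1 -> is_derive F t (dF t)) ->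
  (forall t, t <= T1 -> Rabs (F t) <= KF) ->
  (forall eta, 0 < eta -> exists k T, 0 < k /\ T <= T1 /\
     forall t, t <= T -> eta <= Rabs (F t) -> eta <= Rabs (F t - Z) -> dF t <= - k) ->
  forall eta, 0 < eta -> exists T, forall s t, s <= T -> t <= T -> Rabs (F s - F t) <= 2 * eta.
Proof.
  intros HZ Hd HB HP eta0 Heta0.
  set (eta := Rmin eta0 (- Z / 4)).
  assert (He1 : eta <= eta0) by apply Rmin_l.
  assert (He2 : eta <= - Z / 4) by apply Rmin_r.
  assert (Heta : 0 < eta) by (apply Rmin_glb_lt; lra).
  destruct (HP eta Heta) as [k [T [Hk [HT HPT]]]].
  assert (HdT : forall t, t <= T -> is_derive F t (dF t)) by (intros; apply Hd; lra).
  assert (HBT : forall t, t <= T -> Rabs (F t) <= KF) by (intros; apply HB; lra).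
  assert (Rg : forall t, t <= T -> (eta <= F t \/ F t <= Z - eta \/ (Z + eta <= F t <= - eta)) -> dF t <= - k).
  { intros t Ht Hr. apply HPT; auto.
    - destruct Hr as [h|[h|h]]; [rewrite Rabs_right|rewrite Rabs_left|rewrite Rabs_left]; lra.
    - destruct Hr as [h|[h|h]]; [rewrite Rabs_right|rewrite Rabs_left|rewrite Rabs_right]; lra. }
  assert (Hi : forall t, t <= T -> F t <= eta).
  { intros t0 Ht0. apply Rnot_lt_le. intro Hc.
    assert (Hge : forall tau, tau <= t0 -> F t0 <= F tau).
    { intros tau Htau. apply Rnot_lt_le. intro Hlt.
      assert (F t0 < F t0).
      { apply (no_up F dF T (Rmax (F tau) eta) (F t0)) with (s := tau); auto.
        apply Rmax_lub_lt; lra.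
        intros t Ht Hb. enough (dF t <= - k) by lra. apply Rg; auto. left. pose proof (Rmax_r (F tau) eta). lra.
        apply Rmax_l. }
      lra. }
    apply (unbounded F dF t0 KF k Hk).
    intros; apply Hd; lra.
    intros t Ht. apply Rg. lra. left. specialize (Hge t Ht). lra.
    intros; apply HB; lra. }
  assert (HK0 : 0 <= KF) by (specialize (HB T1 ltac:(lra)); pose proof (Rabs_pos (F T1)); lra).
  set (T' := T - (2 * KF + 1) / k).
  assert (Hp : 0 < (2*KF+1)/k) by (apply Rdiv_lt_0_compat; lra).
  assert (Hii : forall t, t <= T' -> Z - eta <= F t).
  { intros t0 Ht0. apply Rnot_lt_le. intro Hc.
    assert (Hlow : forall t, t0 <= t -> t <= T -> F t < Z - eta).
    { intros t Ht1 Ht2.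
      apply (no_up F dF T (F t0) (Z - eta)) with (s := t0).
      exact Hc. exact HdT.
      intros s Hs Hb. enough (dF s <= - k) by lra. apply Rg; auto. right; left; lra. lra. lra. lra. }
    assert (F T + k * T <= F t0 + k * t0).
    { apply (mono_nonpos (fun x => F x + k * x) (fun x => dF x + k)). unfold T' in Ht0. lra.
      intros x Hx. auto_derive. exists (dF x). apply HdT. lra.
      rwD F x (dF x) ltac:(apply HdT; lra). ring.
      intros x Hx. assert (dF x <= - k). apply Rg. lra. right; left.
      destruct (Rle_lt_or_eq_dec t0 x ltac:(lra)) as [h|h]. 
      specialize (Hlow x ltac:(lra) ltac:(lra)). lra. subst. lra. lra. }
    assert (k * (T - t0) >= 2 * KF + 1).
    { unfold T' in Ht0. assert (T - t0 >= (2*KF+1)/k) by lra.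
      apply Rle_ge. replace (2*KF+1) with (k * ((2*KF+1)/k)) by (field; lra).
      apply Rmult_le_compat_l; lra. }
    specialize (HBT T ltac:(lra)) as HB0. specialize (HBT t0 ltac:(unfold T' in Ht0; lra)).
    apply Rabs_le_between in HB0. apply Rabs_le_between in HBT. nra. }
  destruct (classic (forall T'', exists t, t <= T'' /\ F t < - eta)) as [HA|HB'].
  -
    assert (HA1 : forall t, t <= T -> F t < - eta).
    { intros t Ht. destruct (HA t) as [t0 [Ht0 Hft0]].
      apply (no_up F dF T (Rmax (F t0) (Z + eta)) (- eta)) with (s := t0); auto.
      apply Rmax_lub_lt; lra.
      intros s Hs Hb. enough (dF s <= - k) by lra. apply Rg; auto. right; right. pose proof (Rmax_r (F t0) (Z+eta)). lra.
      apply Rmax_l. }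
    assert (HA2 : forall t, t <= T -> F t <= Z + eta).
    { intros t1 Ht1. apply Rnot_lt_le. intro Hc.
      assert (Hge : forall tau, tau <= t1 -> F t1 <= F tau).
      { intros tau Htau. apply Rnot_lt_le. intro Hlt.
        assert (F t1 < F t1).
        { apply (no_up F dF T (Rmax (F tau) (Z + eta)) (F t1)) with (s := tau); auto.
          apply Rmax_lub_lt; lra.
          intros t Ht Hb. enough (dF t <= - k) by lra. apply Rg; auto. right; right. pose proof (Rmax_r (F tau) (Z+eta)).
          specialize (HA1 t Ht). split; lra.
          apply Rmax_l. }
        lra. }
      apply (unbounded F dF t1 KF k Hk).
      intros; apply Hd; lra.
      intros t Ht. apply Rg. lra. right; right. specialize (Hge t Ht). specialize (HA1 t ltac:(lra)). lra.
      intros; apply HB; lra. }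
    exists (Rmin T T'). intros s t Hs Ht.
    pose proof (Rmin_l T T'). pose proof (Rmin_r T T').
    pose proof (HA2 s ltac:(lra)). pose proof (HA2 t ltac:(lra)).
    pose proof (Hii s ltac:(lra)). pose proof (Hii t ltac:(lra)).
    apply Rabs_le. lra.
  -
    apply not_all_ex_not in HB'. destruct HB' as [T'' HT''].
    exists (Rmin T T''). intros s t Hs Ht.
    pose proof (Rmin_l T T''). pose proof (Rmin_r T T'').
    assert (Hg : forall u, u <= T'' -> - eta <= F u).
    { intros u Hu. apply Rnot_lt_le. intro h. apply HT''. exists u. auto. }
    pose proof (Hg s ltac:(lra)). pose proof (Hg t ltac:(lra)).
    pose proof (Hi s ltac:(lra)). pose proof (Hi t ltac:(lra)).
    apply Rabs_le. lra.
Qed.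

Lemma stay_lemma (F dF w : R -> R) T KF k l u : 0 < k ->
  (forall t, t <= T -> is_derive F t (dF t)) ->
  (forall t, t <= T -> Rabs (F t) <= KF) ->
  (forall t, t <= T -> l <= w t <= u -> dF t <= - k) ->
  ~ (exists T2, forall t, t <= T2 -> l <= w t <= u).
Proof.
  intros Hk Hd HB Hn [T2 HT2].
  apply (unbounded F dF (Rmin T T2) KF k Hk).
  intros t Ht; apply Hd; pose proof (Rmin_l T T2); lra.
  intros t Ht; apply Hn. pose proof (Rmin_l T T2); lra. apply HT2. pose proof (Rmin_r T T2); lra.
  intros t Ht; apply HB; pose proof (Rmin_l T T2); lra.
Qed.

Lemma cross_lemma (F dF w w1 : R -> R) T k l u : 0 < k -> l < u ->
  (forall t, t <= T -> is_derive F t (dF t)) ->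
  (forall t, t <= T -> is_derive w t (w1 t)) ->
  (forall t, t <= T -> l <= w t <= u -> dF t <= - k * Rabs (w1 t)) ->
  (forall eta, 0 < eta -> exists T', forall s t, s <= T' -> t <= T' -> Rabs (F s - F t) <= eta) ->
  (forall T', exists t, t <= T' /\ w t <= l) ->
  (forall T', exists t, t <= T' /\ u <= w t) -> False.
Proof.
  intros Hk Hlu Hd Hdw Hn HC Hl Hu.
  destruct (HC (k * (u - l) / 2)) as [T' HT']. { apply Rdiv_lt_0_compat; nra. }
  set (T2 := Rmin T T').
  assert (HT2a : T2 <= T) by apply Rmin_l. assert (HT2b : T2 <= T') by apply Rmin_r.
  destruct (Hl T2) as [ta [Hta Hwa]]. destruct (Hu T2) as [tb [Htb Hwb]].
  assert (Hwc : forall x, x <= T -> continuous w x) by (apply (derive_cont w w1 T Hdw)).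
  destruct (Rle_or_lt ta tb) as [Hab|Hab].
  - destruct (segment w ta tb l u Hab Hlu) as [s [t [H1 [H2 [H3 [H4 [H5 H6]]]]]]]; auto.
    intros x Hx; apply Hwc; lra.
    assert (F t + k * w t <= F s + k * w s).
    { apply (mono_nonpos (fun x => F x + k * w x) (fun x => dF x + k * w1 x)). lra.
      intros x Hx. auto_derive. split. exists (dF x). apply Hd. lra. split; auto. exists (w1 x). apply Hdw. lra.
      rwD F x (dF x) ltac:(apply Hd; lra). rwD w x (w1 x) ltac:(apply Hdw; lra). ring.
      intros x Hx. specialize (Hn x ltac:(lra) (H6 x Hx)). pose proof (Rle_abs (w1 x)). nra. }
    specialize (HT' s t ltac:(lra) ltac:(lra)). apply Rabs_le_between in HT'. nra.
  - destruct (segment (fun x => - w x) tb ta (- u) (- l) ltac:(lra) ltac:(lra)) as [s [t [H1 [H2 [H3 [H4 [H5 H6]]]]]]]; auto.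
    intros x Hx. apply continuity_pt_filterlim. apply continuity_pt_opp.
    apply continuity_pt_filterlim. apply Hwc; lra.
    lra. lra.
    assert (F t - k * w t <= F s - k * w s).
    { apply (mono_nonpos (fun x => F x - k * w x) (fun x => dF x - k * w1 x)). lra.
      intros x Hx. auto_derive. split. exists (dF x). apply Hd. lra. split; auto. exists (w1 x). apply Hdw. lra.
      rwD F x (dF x) ltac:(apply Hd; lra). rwD w x (w1 x) ltac:(apply Hdw; lra). ring.
      intros x Hx. specialize (H6 x Hx). specialize (Hn x ltac:(lra) ltac:(lra)). pose proof (Rle_abs (- w1 x)).
      rewrite Rabs_Ropp in H. nra. }
    specialize (HT' s t ltac:(lra) ltac:(lra)). apply Rabs_le_between in HT'. nra.
Qed.

Lemma is_derive_Rpow x e : 0 < x -> is_derive (fun y => Rpower y e) x (e * Rpower x (e - 1)).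
Proof. intros H. apply is_derive_Reals. apply derivable_pt_lim_power. exact H. Qed.

Lemma Rpower_split x p : 0 < x -> Rpower x p = x * Rpower x (p - 1).
Proof.
  intros Hx. replace p with (1 + (p - 1)) at 1 by ring. rewrite Rpower_plus, Rpower_1; auto.
Qed.

Lemma Rpower_split2 x p : 0 < x -> Rpower x (p + 1) = x ^ 2 * Rpower x (p - 1).
Proof.
  intros Hx. replace (p + 1) with (INR 2 + (p - 1)) by (simpl; ring).
  rewrite Rpower_plus, Rpower_pow; auto.
Qed.

Lemma Rpower_pos' x e : 0 < Rpower x e.
Proof. unfold Rpower. apply exp_pos. Qed.

Definition Vp Bc k0 p x := - Bc * x + k0 * Rpower x p.
Definition Vf Bc k0 p x := - Bc * x ^ 2 / 2 + k0 / (p + 1) * Rpower x (p + 1).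
Definition Vpp Bc k0 p x := - Bc + k0 * p * Rpower x (p - 1).

Lemma ineq_core a D beta Q X Y e : 0 < a -> 0 <= D -> beta = a / (2 * D + a ^ 2 + 1) -> Q <= D ->
  X * (- a * X - Y + e) + Y * X + beta * ((- a * X - Y + e) * Y + Q * X ^ 2)
  <= - (beta / 2) * (X ^ 2 + Y ^ 2) + Rabs e * (Rabs X + Rabs Y).
Proof.
  intros Ha HD Hb HQ.
  assert (Hden : 0 < 2 * D + a ^ 2 + 1) by nra.
  assert (Hbp : 0 < beta) by (rewrite Hb; apply Rdiv_lt_0_compat; lra).
  assert (Hbe : beta * (2 * D + a ^ 2 + 1) = a) by (rewrite Hb; field; lra).
  assert (Hb1 : beta <= 1).
  { apply (Rmult_le_reg_r (2 * D + a ^ 2 + 1)); auto. rewrite Hbe.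
    assert (0 <= (a - 1) ^ 2) by apply pow2_ge_0. nra. }
  assert (h1 : beta * Q * X ^ 2 <= beta * D * X ^ 2).
  { apply Rmult_le_compat_r. nra. apply Rmult_le_compat_l; lra. }
  assert (h2 : e * X <= Rabs e * Rabs X) by (rewrite <- Rabs_mult; apply Rle_abs).
  assert (h3 : beta * (e * Y) <= Rabs e * Rabs Y).
  { assert (e * Y <= Rabs e * Rabs Y) by (rewrite <- Rabs_mult; apply Rle_abs).
    assert (0 <= Rabs e * Rabs Y) by (apply Rmult_le_pos; apply Rabs_pos).
    destruct (Rle_or_lt 0 (e * Y)); nra. }
  assert (h4 : - (a * beta * X * Y) <= beta / 2 * Y ^ 2 + a ^ 2 * beta / 2 * X ^ 2).
  { assert (0 <= beta / 2 * (Y + a * X) ^ 2) by (apply Rmult_le_pos; [lra | apply pow2_ge_0]). nra. }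
  assert (h5 : (- a + beta * D + a ^ 2 * beta / 2) * X ^ 2 <= - (beta / 2) * X ^ 2).
  { apply Rmult_le_compat_r. apply pow2_ge_0. nra. }
  nra.
Qed.

Lemma ineq_key beta X Y e S0 dF : 0 < beta -> 0 < S0 ->
  dF <= - (beta / 2) * (X ^ 2 + Y ^ 2) + Rabs e * (Rabs X + Rabs Y) ->
  Rabs e <= beta * S0 / 8 -> S0 <= Rabs X + Rabs Y ->
  dF <= - (beta / 8) * S0 * (Rabs X + Rabs Y).
Proof.
  intros Hb HS Hd He HS0.
  set (S := Rabs X + Rabs Y) in *.
  assert (h1 : S ^ 2 <= 2 * (X ^ 2 + Y ^ 2)).
  { unfold S. assert (Rabs X ^ 2 = X ^ 2) by (rewrite <- Rsqr_pow2, <- Rsqr_abs, Rsqr_pow2; auto).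
    assert (Rabs Y ^ 2 = Y ^ 2) by (rewrite <- Rsqr_pow2, <- Rsqr_abs, Rsqr_pow2; auto).
    assert (0 <= (Rabs X - Rabs Y) ^ 2) by apply pow2_ge_0. nra. }
  assert (h2 : Rabs e * S <= beta * S0 / 8 * S) by (apply Rmult_le_compat_r; [unfold S; pose proof (Rabs_pos X); pose proof (Rabs_pos Y); lra | auto]).
  assert (h3 : 0 <= beta / 8 * S * (S - S0)) by (apply Rmult_le_pos; [apply Rmult_le_pos; lra | lra]).
  nra.
Qed.

Definition Fe Bc k0 p beta (w w1 : R -> R) x :=
  w1 x ^ 2 / 2 + Vf Bc k0 p (w x) + beta * w1 x * Vp Bc k0 p (w x).
Definition dFe Bc k0 p beta (w w1 w2 : R -> R) x :=
  w1 x * w2 x + Vp Bc k0 p (w x) * w1 x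
  + beta * (w2 x * Vp Bc k0 p (w x) + w1 x * (Vpp Bc k0 p (w x) * w1 x)).

Lemma Fe_derive a Bc k0 p gam M w w1 w2 eps T0 beta :
  setup a Bc k0 p gam M w w1 w2 eps T0 ->
  forall t, t <= T0 -> is_derive (Fe Bc k0 p beta w w1) t (dFe Bc k0 p beta w w1 w2 t).
Proof.
  intros S t Ht.
  assert (Hw := s_w _ _ _ _ _ _ _ _ _ _ _ S t Ht).
  assert (Hd1 := s_d1 _ _ _ _ _ _ _ _ _ _ _ S t Ht).
  assert (Hd2 := s_d2 _ _ _ _ _ _ _ _ _ _ _ S t Ht).
  pose proof (s_p _ _ _ _ _ _ _ _ _ _ _ S) as Hp.
  unfold Fe, dFe, Vf, Vp, Vpp. auto_derive.
  - repeat split; first [ (exists (w2 t); exact Hd2) | (exists (w1 t); exact Hd1) | (eexists; apply is_derive_Rpow; lra) ].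
  - rwD w1 t (w2 t) ltac:(exact Hd2). rwD w t (w1 t) ltac:(exact Hd1).
    rewrite (Deq (fun y => Rpower y (p+1)) (w t) ((p + 1) * Rpower (w t) (p + 1 - 1))) by (apply is_derive_Rpow; lra).
    rewrite (Deq (fun y => Rpower y p) (w t) (p * Rpower (w t) (p - 1))) by (apply is_derive_Rpow; lra).
    replace (p + 1 - 1) with p by ring. field. lra.
Qed.

Lemma dFe_bound a Bc k0 p gam M w w1 w2 eps T0 :
  setup a Bc k0 p gam M w w1 w2 eps T0 ->
  forall t, t <= T0 ->
  let beta := a / (2 * (k0 * p * Rpower M (p - 1)) + a ^ 2 + 1) in
  dFe Bc k0 p beta w w1 w2 t <=
    - (beta / 2) * (w1 t ^ 2 + Vp Bc k0 p (w t) ^ 2) + Rabs (eps t) * (Rabs (w1 t) + Rabs (Vp Bc k0 p (w t))).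
Proof.
  intros S t Ht beta.
  assert (Hw := s_w _ _ _ _ _ _ _ _ _ _ _ S t Ht).
  pose proof (s_p _ _ _ _ _ _ _ _ _ _ _ S) as Hp.
  pose proof (s_a _ _ _ _ _ _ _ _ _ _ _ S) as Ha.
  pose proof (s_k0 _ _ _ _ _ _ _ _ _ _ _ S) as Hk0.
  pose proof (s_B _ _ _ _ _ _ _ _ _ _ _ S) as HB.
  assert (Hode := s_ode _ _ _ _ _ _ _ _ _ _ _ S t Ht).
  assert (HD : 0 <= k0 * p * Rpower M (p - 1)).
  { pose proof (Rpower_pos' M (p-1)). apply Rmult_le_pos; nra. }
  assert (HQ : Vpp Bc k0 p (w t) <= k0 * p * Rpower M (p - 1)).
  { unfold Vpp. assert (Rpower (w t) (p-1) <= Rpower M (p-1)) by (apply Rle_Rpower_l; lra).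
    assert (0 < k0 * p) by nra. nra. }
  unfold dFe.
  replace (w2 t) with (- a * w1 t - Vp Bc k0 p (w t) + eps t) by (rewrite Hode; unfold Vp; ring).
  replace (w1 t * (Vpp Bc k0 p (w t) * w1 t)) with (Vpp Bc k0 p (w t) * w1 t ^ 2) by ring.
  apply ineq_core with (D := k0 * p * Rpower M (p - 1)); auto.
Qed.

Lemma Vp_low Bc k0 p gam l u x : 0 < k0 -> 1 < p -> k0 * Rpower gam (p-1) = Bc ->
  0 < l -> l <= x -> x <= u -> u < gam ->
  0 < Bc - k0 * Rpower u (p - 1) /\ l * (Bc - k0 * Rpower u (p - 1)) <= - Vp Bc k0 p x.
Proof.
  intros Hk Hp Hg Hl Hlx Hxu Hu.
  assert (h1 : Rpower u (p - 1) < Rpower gam (p - 1)) by (apply Rlt_Rpower_l; lra).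
  assert (h2 : Rpower x (p - 1) <= Rpower u (p - 1)) by (apply Rle_Rpower_l; lra).
  split. nra.
  unfold Vp. rewrite (Rpower_split x p) by lra.
  assert (0 < Bc - k0 * Rpower u (p - 1)) by nra.
  assert (Bc - k0 * Rpower u (p - 1) <= Bc - k0 * Rpower x (p - 1)) by nra.
  nra.
Qed.

Lemma Vp_high Bc k0 p gam l x : 0 < k0 -> 1 < p -> k0 * Rpower gam (p-1) = Bc ->
  0 < gam -> gam < l -> l <= x ->
  0 < k0 * Rpower l (p - 1) - Bc /\ l * (k0 * Rpower l (p - 1) - Bc) <= Vp Bc k0 p x.
Proof.
  intros Hk Hp Hg Hg0 Hl Hlx.
  assert (h1 : Rpower gam (p - 1) < Rpower l (p - 1)) by (apply Rlt_Rpower_l; lra).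
  assert (h2 : Rpower l (p - 1) <= Rpower x (p - 1)) by (apply Rle_Rpower_l; lra).
  split. nra.
  unfold Vp. rewrite (Rpower_split x p) by lra.
  assert (0 < k0 * Rpower l (p - 1) - Bc) by nra.
  assert (k0 * Rpower l (p - 1) - Bc <= k0 * Rpower x (p - 1) - Bc) by nra.
  nra.
Qed.

Lemma Rpower_base1 y : Rpower 1 y = 1.
Proof. unfold Rpower. rewrite ln_1, Rmult_0_r, exp_0. reflexivity. Qed.

Lemma Vf_small Bc k0 p x : 0 < x -> x <= 1 -> 0 < k0 -> 0 < Bc -> 1 < p ->
  Rabs (Vf Bc k0 p x) <= (Bc + k0) * x.
Proof.
  intros Hx Hx1 Hk HB Hp. unfold Vf. rewrite Rpower_split2 by lra.
  assert (h1 : Rpower x (p - 1) <= 1) by (pose proof (Rpower_base1 (p-1)) as E1; rewrite <- E1 at 2; apply Rle_Rpower_l; lra).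
  pose proof (Rpower_pos' x (p-1)).
  assert (h2 : x ^ 2 <= x) by nra.
  assert (h3 : 0 <= k0 / (p + 1) <= k0).
  { split. apply Rdiv_le_0_compat; lra. apply (Rmult_le_reg_r (p+1)). lra.
    unfold Rdiv. rewrite Rmult_assoc, Rinv_l by lra. nra. }
  assert (0 <= x ^ 2) by nra.
  assert (0 <= k0 / (p+1) * (x ^ 2 * Rpower x (p - 1)) <= k0 * x ^ 2).
  { split. apply Rmult_le_pos; nra. 
    apply Rle_trans with (k0 / (p+1) * x ^ 2). apply Rmult_le_compat_l; nra. nra. }
  apply Rabs_le. split; nra.
Qed.

Lemma Vf_bound Bc k0 p M x : 0 < x -> x <= M -> 0 < k0 -> 0 < Bc -> 1 < p ->
  Rabs (Vf Bc k0 p x) <= Bc * M ^ 2 + k0 * Rpower M (p + 1).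
Proof.
  intros Hx HxM Hk HB Hp. unfold Vf.
  assert (h1 : Rpower x (p + 1) <= Rpower M (p + 1)) by (apply Rle_Rpower_l; lra).
  pose proof (Rpower_pos' x (p+1)).
  assert (h3 : 0 <= k0 / (p + 1) <= k0).
  { split. apply Rdiv_le_0_compat; lra. apply (Rmult_le_reg_r (p+1)). lra.
    unfold Rdiv. rewrite Rmult_assoc, Rinv_l by lra. nra. }
  assert (x ^ 2 <= M ^ 2) by (apply pow_incr; lra).
  assert (0 <= k0 / (p+1) * Rpower x (p + 1) <= k0 * Rpower M (p+1)).
  { split. apply Rmult_le_pos; nra.
    apply Rle_trans with (k0 * Rpower x (p+1)). apply Rmult_le_compat_r; nra. nra. }
  apply Rabs_le. split; nra.
Qed.

Lemma Vp_bound Bc k0 p M x : 0 < x -> x <= M -> 0 < k0 -> 0 < Bc -> 1 < p ->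
  Rabs (Vp Bc k0 p x) <= Bc * M + k0 * Rpower M p.
Proof.
  intros Hx HxM Hk HB Hp. unfold Vp.
  assert (h1 : Rpower x p <= Rpower M p) by (apply Rle_Rpower_l; lra).
  pose proof (Rpower_pos' x p).
  apply Rabs_le. split; nra.
Qed.

Lemma Vf_cont Bc k0 p y : 0 < y -> continuous (Vf Bc k0 p) y.
Proof.
  intros Hy. apply (ex_derive_continuous (Vf Bc k0 p) y). unfold Vf. auto_derive.
  eexists. apply is_derive_Rpow; lra.
Qed.

Lemma Z_neg Bc k0 p gam : 0 < k0 -> 1 < p -> 0 < gam -> k0 * Rpower gam (p-1) = Bc -> 0 < Bc ->
  Vf Bc k0 p gam < 0.
Proof.
  intros Hk Hp Hg HgB HB. unfold Vf. rewrite Rpower_split2 by lra.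
  replace (k0 / (p + 1) * (gam ^ 2 * Rpower gam (p - 1))) with (gam ^ 2 * (k0 * Rpower gam (p-1)) / (p + 1)) by (field; lra).
  rewrite HgB.
  assert (0 < gam ^ 2) by nra.
  assert (gam ^ 2 * Bc / (p + 1) < gam ^ 2 * Bc / 2).
  { unfold Rdiv. apply Rmult_lt_compat_l. nra. apply Rinv_lt_contravar; nra. }
  lra.
Qed.

Lemma near_eq Bc k0 p gam beta eta : 0 < k0 -> 1 < p -> 0 < gam -> k0 * Rpower gam (p-1) = Bc -> 0 < Bc ->
  0 <= beta <= 1 -> 0 < eta ->
  exists S0, 0 < S0 /\ forall x X, 0 < x -> Rabs X + Rabs (Vp Bc k0 p x) < S0 ->
    Rabs (X ^ 2 / 2 + Vf Bc k0 p x + beta * X * Vp Bc k0 p x) < eta \/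
    Rabs (X ^ 2 / 2 + Vf Bc k0 p x + beta * X * Vp Bc k0 p x - Vf Bc k0 p gam) < eta.
Proof.
  intros Hk Hp Hg HgB HB Hb He.
  destruct (cont_eps (Vf Bc k0 p) gam (Vf_cont Bc k0 p gam Hg) (eta / 4) ltac:(lra)) as [rg [Hrg Hrg']].
  set (rho := Rmin (Rmin (gam / 2) 1) (Rmin (eta / (4 * (Bc + k0))) rg)).
  assert (Hr1 : rho <= gam / 2) by (unfold rho; pose proof (Rmin_l (Rmin (gam / 2) 1) (Rmin (eta / (4 * (Bc + k0))) rg)); pose proof (Rmin_l (gam/2) 1); lra).
  assert (Hr2 : rho <= 1) by (unfold rho; pose proof (Rmin_l (Rmin (gam / 2) 1) (Rmin (eta / (4 * (Bc + k0))) rg)); pose proof (Rmin_r (gam/2) 1); lra).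
  assert (Hr3 : rho <= eta / (4 * (Bc + k0))) by (unfold rho; pose proof (Rmin_r (Rmin (gam / 2) 1) (Rmin (eta / (4 * (Bc + k0))) rg)); pose proof (Rmin_l (eta / (4 * (Bc + k0))) rg); lra).
  assert (Hr4 : rho <= rg) by (unfold rho; pose proof (Rmin_r (Rmin (gam / 2) 1) (Rmin (eta / (4 * (Bc + k0))) rg)); pose proof (Rmin_r (eta / (4 * (Bc + k0))) rg); lra).
  assert (Hr0 : 0 < rho).
  { unfold rho. apply Rmin_glb_lt; apply Rmin_glb_lt; try lra. apply Rdiv_lt_0_compat; lra. }
  destruct (Vp_low Bc k0 p gam rho (gam - rho) (gam - rho) Hk Hp HgB Hr0 ltac:(lra) ltac:(lra) ltac:(lra)) as [m1p _].
  destruct (Vp_high Bc k0 p gam (gam + rho) (gam + rho) Hk Hp HgB Hg ltac:(lra) ltac:(lra)) as [m2p _].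
  set (m1 := rho * (Bc - k0 * Rpower (gam - rho) (p - 1))).
  set (m2 := (gam + rho) * (k0 * Rpower (gam + rho) (p - 1) - Bc)).
  set (S0 := Rmin (Rmin m1 m2) (Rmin 1 (eta / 4))).
  assert (HS1 : S0 <= m1) by (unfold S0; pose proof (Rmin_l (Rmin m1 m2) (Rmin 1 (eta / 4))); pose proof (Rmin_l m1 m2); lra).
  assert (HS2 : S0 <= m2) by (unfold S0; pose proof (Rmin_l (Rmin m1 m2) (Rmin 1 (eta / 4))); pose proof (Rmin_r m1 m2); lra).
  assert (HS3 : S0 <= 1) by (unfold S0; pose proof (Rmin_r (Rmin m1 m2) (Rmin 1 (eta / 4))); pose proof (Rmin_l 1 (eta/4)); lra).
  assert (HS4 : S0 <= eta / 4) by (unfold S0; pose proof (Rmin_r (Rmin m1 m2) (Rmin 1 (eta / 4))); pose proof (Rmin_r 1 (eta/4)); lra).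
  assert (HS0 : 0 < S0).
  { unfold S0. apply Rmin_glb_lt; apply Rmin_glb_lt; try lra. unfold m1; nra. unfold m2; nra. }
  exists S0. split. exact HS0.
  intros x X Hx HS.
  set (Y := Vp Bc k0 p x) in *.
  assert (HX : Rabs X < S0) by (pose proof (Rabs_pos Y); lra).
  assert (HY : Rabs Y < S0) by (pose proof (Rabs_pos X); lra).
  assert (Hcore : Rabs (X ^ 2 / 2 + beta * X * Y) <= 3 / 2 * S0 * S0).
  { rewrite <- (Rabs_right (3/2*S0*S0)) by nra.
    assert (Rabs (X^2/2) <= S0 * S0 / 2).
    { rewrite Rabs_right by nra. assert (X ^ 2 = Rabs X * Rabs X) by (rewrite <- Rabs_mult; rewrite Rabs_right; nra). 
      pose proof (Rabs_pos X). nra. }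
    assert (Rabs (beta * X * Y) <= S0 * S0).
    { rewrite !Rabs_mult. rewrite (Rabs_right beta) by lra. pose proof (Rabs_pos X). pose proof (Rabs_pos Y).
      assert (Rabs X * Rabs Y <= S0 * S0) by nra. nra. }
    pose proof (Rabs_triang (X ^ 2 / 2) (beta * X * Y)).
    rewrite (Rabs_right (3/2*S0*S0)) by nra. lra. }
  assert (HSS : 3 / 2 * S0 * S0 <= 3 / 8 * eta) by nra.
  destruct (Rlt_or_le x rho) as [h1|h1].
  - left. pose proof (Vf_small Bc k0 p x Hx ltac:(lra) Hk HB Hp).
    assert ((Bc + k0) * x <= eta / 4).
    { apply Rle_trans with ((Bc + k0) * (eta / (4 * (Bc + k0)))). apply Rmult_le_compat_l; lra.
      right. field. lra. }
    replace (X ^ 2 / 2 + Vf Bc k0 p x + beta * X * Y) with ((X ^ 2 / 2 + beta * X * Y) + Vf Bc k0 p x) by ring.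
    pose proof (Rabs_triang (X ^ 2 / 2 + beta * X * Y) (Vf Bc k0 p x)). lra.
  - destruct (Rle_or_lt x (gam - rho)) as [h2|h2].
    + exfalso. destruct (Vp_low Bc k0 p gam rho (gam - rho) x Hk Hp HgB Hr0 h1 h2 ltac:(lra)) as [_ h3].
      fold Y in h3. fold m1 in h3. pose proof (Rle_abs (- Y)). rewrite Rabs_Ropp in H. lra.
    + destruct (Rlt_or_le x (gam + rho)) as [h3|h3].
      * right. assert (Rabs (x - gam) < rg) by (apply Rabs_def1; lra).
        specialize (Hrg' x H).
        replace (X ^ 2 / 2 + Vf Bc k0 p x + beta * X * Y - Vf Bc k0 p gam) with ((X ^ 2 / 2 + beta * X * Y) + (Vf Bc k0 p x - Vf Bc k0 p gam)) by ring.
        pose proof (Rabs_triang (X ^ 2 / 2 + beta * X * Y) (Vf Bc k0 p x - Vf Bc k0 p gam)). lra.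
      * exfalso. destruct (Vp_high Bc k0 p gam (gam + rho) x Hk Hp HgB Hg ltac:(lra) h3) as [_ h4].
        fold Y in h4. fold m2 in h4. pose proof (Rle_abs Y). lra.
Qed.

Lemma eventually_not (P : R -> Prop) :
  ~ (forall T, exists t, t <= T /\ P t) -> exists T, forall t, t <= T -> ~ P t.
Proof.
  intros Hn. apply not_all_ex_not in Hn. destruct Hn as [T HT].
  exists T. intros t Ht HP. apply HT. exists t. auto.
Qed.

Theorem core a Bc k0 p gam M w w1 w2 eps T0 :
  setup a Bc k0 p gam M w w1 w2 eps T0 ->
  (exists lam, 0 < lam /\ forall T, exists t, t <= T /\ lam < w t) ->
  forall sig, 0 < sig -> exists T, forall t, t <= T -> Rabs (w t - gam) < sig.
Proof.
  intros S [lam [Hlam Hlamw]] sig Hsig.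
  pose proof (s_a _ _ _ _ _ _ _ _ _ _ _ S) as Ha.
  pose proof (s_B _ _ _ _ _ _ _ _ _ _ _ S) as HB.
  pose proof (s_k0 _ _ _ _ _ _ _ _ _ _ _ S) as Hk0.
  pose proof (s_p _ _ _ _ _ _ _ _ _ _ _ S) as Hp.
  pose proof (s_gam _ _ _ _ _ _ _ _ _ _ _ S) as Hg.
  pose proof (s_gamB _ _ _ _ _ _ _ _ _ _ _ S) as HgB.
  pose proof (s_M _ _ _ _ _ _ _ _ _ _ _ S) as HM.
  pose proof (s_w _ _ _ _ _ _ _ _ _ _ _ S) as Hw.
  pose proof (s_d1 _ _ _ _ _ _ _ _ _ _ _ S) as Hd1.
  pose proof (s_ode _ _ _ _ _ _ _ _ _ _ _ S) as Hode.
  pose proof (s_eps _ _ _ _ _ _ _ _ _ _ _ S) as Heps.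
  destruct (Heps 1 ltac:(lra)) as [Te HTe].
  set (T1 := Rmin T0 Te).
  assert (HT1a : T1 <= T0) by apply Rmin_l. assert (HT1b : T1 <= Te) by apply Rmin_r.
  set (Hc := Bc * M + k0 * Rpower M p + 1).
  assert (HMp : 0 < Rpower M p) by apply Rpower_pos'.
  assert (HHc : 0 <= Hc) by (unfold Hc; nra).
  assert (Hh : forall t, t <= T1 -> Rabs (w2 t + a * w1 t) <= Hc).
  { intros t Ht. rewrite Hode by lra.
    replace (- a * w1 t + Bc * w t - k0 * Rpower (w t) p + eps t + a * w1 t) with (- Vp Bc k0 p (w t) + eps t) by (unfold Vp; ring).
    pose proof (Vp_bound Bc k0 p M (w t) ltac:(apply Hw; lra) ltac:(apply Hw; lra) Hk0 HB Hp).
    pose proof (HTe t ltac:(lra)). pose proof (Rabs_triang (- Vp Bc k0 p (w t)) (eps t)).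
    rewrite Rabs_Ropp in H1. unfold Hc. lra. }
  set (M1 := Hc / a).
  assert (HM1 : forall t, t <= T1 -> Rabs (w1 t) <= M1) by (apply (w1_bound a Bc k0 p gam M w w1 w2 eps T0 Hc T1 S); auto).
  assert (HM10 : 0 <= M1) by (unfold M1; apply Rdiv_le_0_compat; lra).
  set (D := k0 * p * Rpower M (p - 1)).
  assert (HD : 0 <= D) by (unfold D; pose proof (Rpower_pos' M (p-1)); apply Rmult_le_pos; nra).
  set (beta := a / (2 * D + a ^ 2 + 1)).
  assert (Hden : 0 < 2 * D + a ^ 2 + 1) by nra.
  assert (Hbp : 0 < beta) by (unfold beta; apply Rdiv_lt_0_compat; lra).
  assert (Hbe : beta * (2 * D + a ^ 2 + 1) = a) by (unfold beta; field; lra).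
  assert (Hb1 : beta <= 1).
  { apply (Rmult_le_reg_r (2 * D + a ^ 2 + 1)); auto. rewrite Hbe.
    assert (0 <= (a - 1) ^ 2) by apply pow2_ge_0. nra. }
  set (F := Fe Bc k0 p beta w w1).
  set (dF := dFe Bc k0 p beta w w1 w2).
  assert (HdF : forall t, t <= T1 -> is_derive F t (dF t)).
  { intros t Ht. apply (Fe_derive a Bc k0 p gam M w w1 w2 eps T0 beta S). lra. }
  assert (HdFb : forall t, t <= T1 -> dF t <= - (beta / 2) * (w1 t ^ 2 + Vp Bc k0 p (w t) ^ 2)
      + Rabs (eps t) * (Rabs (w1 t) + Rabs (Vp Bc k0 p (w t)))).
  { intros t Ht. apply (dFe_bound a Bc k0 p gam M w w1 w2 eps T0 S). lra. }
  set (KF := M1 ^ 2 / 2 + (Bc * M ^ 2 + k0 * Rpower M (p + 1)) + M1 * (Bc * M + k0 * Rpower M p)).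
  assert (HKF : forall t, t <= T1 -> Rabs (F t) <= KF).
  { intros t Ht. unfold F, Fe, KF.
    pose proof (HM1 t Ht). pose proof (Hw t ltac:(lra)).
    pose proof (Vf_bound Bc k0 p M (w t) ltac:(lra) ltac:(lra) Hk0 HB Hp).
    pose proof (Vp_bound Bc k0 p M (w t) ltac:(lra) ltac:(lra) Hk0 HB Hp).
    pose proof (Rabs_pos (w1 t)). pose proof (Rabs_pos (Vp Bc k0 p (w t))).
    assert (Rabs (w1 t ^ 2 / 2) <= M1 ^ 2 / 2).
    { rewrite Rabs_right by nra. assert (w1 t ^ 2 = Rabs (w1 t) ^ 2) by (rewrite <- Rsqr_pow2, Rsqr_abs, Rsqr_pow2; auto). nra. }
    assert (Rabs (beta * w1 t * Vp Bc k0 p (w t)) <= M1 * (Bc * M + k0 * Rpower M p)).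
    { rewrite !Rabs_mult, (Rabs_right beta) by lra. 
      assert (Rabs (w1 t) * Rabs (Vp Bc k0 p (w t)) <= M1 * (Bc * M + k0 * Rpower M p)) by (apply Rmult_le_compat; lra).
      assert (0 <= Rabs (w1 t) * Rabs (Vp Bc k0 p (w t))) by nra. nra. }
    pose proof (Rabs_triang (w1 t ^ 2 / 2 + Vf Bc k0 p (w t)) (beta * w1 t * Vp Bc k0 p (w t))).
    pose proof (Rabs_triang (w1 t ^ 2 / 2) (Vf Bc k0 p (w t))). lra. }
  assert (Key : forall S0, 0 < S0 -> exists T, T <= T1 /\ forall t, t <= T ->
      S0 <= Rabs (w1 t) + Rabs (Vp Bc k0 p (w t)) ->
      dF t <= - (beta / 8) * S0 * (Rabs (w1 t) + Rabs (Vp Bc k0 p (w t)))).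
  { intros S0 HS0. destruct (Heps (beta * S0 / 8)) as [Tq HTq]. nra.
    exists (Rmin T1 Tq). split. apply Rmin_l. intros t Ht HSt.
    pose proof (Rmin_l T1 Tq). pose proof (Rmin_r T1 Tq).
    apply (ineq_key beta (w1 t) (Vp Bc k0 p (w t)) (eps t) S0 (dF t)); auto.
    apply HdFb. lra. apply HTq. lra. }
  set (Z := Vf Bc k0 p gam).
  assert (HZ : Z < 0) by (apply Z_neg; auto).
  assert (HC : forall eta, 0 < eta -> exists T', forall s t, s <= T' -> t <= T' -> Rabs (F s - F t) <= eta).
  { intros eta Heta.
    assert (HCF := cauchy_F F dF T1 KF Z HZ HdF HKF).
    destruct (HCF) with (eta := eta / 2) as [T' HT']; [|lra|].
    2: { exists T'. intros s t Hs Ht. specialize (HT' s t Hs Ht). lra. }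
    intros e He.
    destruct (near_eq Bc k0 p gam beta e Hk0 Hp Hg HgB HB ltac:(lra) He) as [S0 [HS0 HS0']].
    destruct (Key S0 HS0) as [T [HT HT']].
    exists (beta / 8 * S0 * S0), T. split. apply Rmult_lt_0_compat; [apply Rmult_lt_0_compat|]; lra. split. exact HT.
    intros t Ht H1 H2.
    assert (HSt : S0 <= Rabs (w1 t) + Rabs (Vp Bc k0 p (w t))).
    { apply Rnot_lt_le. intro Hlt.
      destruct (HS0' (w t) (w1 t) ltac:(apply Hw; lra) Hlt) as [h|h];
      unfold F, Fe in H1, H2; fold Z in h; lra. }
    specialize (HT' t Ht HSt).
    assert (0 <= beta / 8 * S0 * (Rabs (w1 t) + Rabs (Vp Bc k0 p (w t)) - S0)).
    { apply Rmult_le_pos; [apply Rmult_le_pos|]; lra. }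
    lra. }
  assert (Band : forall l u m, 0 < m -> (forall x, l <= x <= u -> m <= Rabs (Vp Bc k0 p x)) ->
     exists T, T <= T1 /\ (forall t, t <= T -> l <= w t <= u -> dF t <= - (beta / 8 * m) * Rabs (w1 t))
       /\ (forall t, t <= T -> l <= w t <= u -> dF t <= - (beta / 8 * m * m))).
  { intros l u m Hm Hlu. destruct (Key m Hm) as [T [HT HT']].
    exists T. split. exact HT. split.
    - intros t Ht Hwt. pose proof (Hlu (w t) Hwt). pose proof (Rabs_pos (w1 t)).
      assert (m <= Rabs (w1 t) + Rabs (Vp Bc k0 p (w t))) by lra.
      specialize (HT' t Ht H1).
      assert (0 <= beta / 8 * m * Rabs (Vp Bc k0 p (w t))).
      { apply Rmult_le_pos; [apply Rmult_le_pos|]; try lra; apply Rabs_pos. }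
      lra.
    - intros t Ht Hwt. pose proof (Hlu (w t) Hwt). pose proof (Rabs_pos (w1 t)).
      assert (m <= Rabs (w1 t) + Rabs (Vp Bc k0 p (w t))) by lra.
      specialize (HT' t Ht H1).
      assert (0 <= beta / 8 * m * (Rabs (w1 t) + Rabs (Vp Bc k0 p (w t)) - m)).
      { apply Rmult_le_pos; [apply Rmult_le_pos|]; lra. }
      lra. }
  assert (BandLow : forall l u, 0 < l -> l < u -> u < gam -> exists T, T <= T1 /\ exists k, 0 < k /\
       (forall t, t <= T -> l <= w t <= u -> dF t <= - k * Rabs (w1 t)) /\
       (forall t, t <= T -> l <= w t <= u -> dF t <= - k * (l * (Bc - k0 * Rpower u (p - 1))))).
  { intros l u Hl Hlu Hu.
    destruct (Vp_low Bc k0 p gam l u u Hk0 Hp HgB Hl ltac:(lra) ltac:(lra) Hu) as [Hm _].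
    destruct (Band l u (l * (Bc - k0 * Rpower u (p - 1)))) as [T [HT [HA HB']]].
    apply Rmult_lt_0_compat; lra.
    intros x Hx. destruct (Vp_low Bc k0 p gam l u x Hk0 Hp HgB Hl ltac:(lra) ltac:(lra) Hu) as [_ h].
    pose proof (Rle_abs (- Vp Bc k0 p x)). rewrite Rabs_Ropp in H. lra.
    exists T. split. exact HT. exists (beta / 8 * (l * (Bc - k0 * Rpower u (p - 1)))). split. apply Rmult_lt_0_compat; [lra|apply Rmult_lt_0_compat; lra].
    split. exact HA. intros t Ht Hwt. specialize (HB' t Ht Hwt). lra. }
  assert (BandHigh : forall l, gam < l -> exists T, T <= T1 /\ exists k, 0 < k /\
       (forall t, t <= T -> l <= w t <= M -> dF t <= - k * Rabs (w1 t)) /\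
       (forall t, t <= T -> l <= w t <= M -> dF t <= - k * (l * (k0 * Rpower l (p - 1) - Bc)))).
  { intros l Hl.
    destruct (Vp_high Bc k0 p gam l l Hk0 Hp HgB Hg Hl ltac:(lra)) as [Hm _].
    destruct (Band l M (l * (k0 * Rpower l (p - 1) - Bc))) as [T [HT [HA HB']]].
    apply Rmult_lt_0_compat; lra.
    intros x Hx. destruct (Vp_high Bc k0 p gam l x Hk0 Hp HgB Hg Hl ltac:(lra)) as [_ h].
    pose proof (Rle_abs (Vp Bc k0 p x)). lra.
    exists T. split. exact HT. exists (beta / 8 * (l * (k0 * Rpower l (p - 1) - Bc))). split. apply Rmult_lt_0_compat; [lra|apply Rmult_lt_0_compat; lra].
    split. exact HA. intros t Ht Hwt. specialize (HB' t Ht Hwt). lra. }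

  set (lam' := Rmin lam (gam / 2)).
  assert (Hl1 : lam' <= lam) by apply Rmin_l. assert (Hl2 : lam' <= gam / 2) by apply Rmin_r.
  assert (Hl0 : 0 < lam') by (apply Rmin_glb_lt; lra).
  set (s0 := lam' / 4).
  assert (Ha1 : exists Ta, forall t, t <= Ta -> s0 < w t).
  { destruct (classic (forall T, exists t, t <= T /\ w t <= s0)) as [Hc1|Hc1].
    - exfalso. destruct (BandLow s0 lam') as [T [HT [k [Hk [HA _]]]]]. unfold s0; lra. unfold s0; lra. lra.
      apply (cross_lemma F dF w w1 T k s0 lam' Hk ltac:(unfold s0; lra)); auto.
      intros; apply HdF; lra. intros; apply Hd1; lra.
      intros T'. destruct (Hlamw T') as [t [Ht Hwt]]. exists t. split; auto. lra.
    - apply (eventually_not (fun t => w t <= s0)) in Hc1. destruct Hc1 as [Ta HTa].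
      exists Ta. intros t Ht. specialize (HTa t Ht). lra. }
  destruct Ha1 as [Ta HTa].
  set (sg := Rmin sig (gam / 2)).
  assert (Hs1 : sg <= sig) by apply Rmin_l. assert (Hs2 : sg <= gam / 2) by apply Rmin_r.
  assert (Hs0 : 0 < sg) by (apply Rmin_glb_lt; lra).
  assert (Hup : exists Tu, forall t, t <= Tu -> w t < gam + sg).
  { destruct (classic (forall T, exists t, t <= T /\ gam + sg <= w t)) as [Hc1|Hc1].
    - exfalso. destruct (BandHigh (gam + sg / 2)) as [T [HT [k [Hk [HA HB']]]]]. lra.
      destruct (Vp_high Bc k0 p gam (gam + sg / 2) (gam + sg / 2) Hk0 Hp HgB Hg ltac:(lra) ltac:(lra)) as [Hm _].
      assert (Hn : ~ (forall T', exists t, t <= T' /\ w t <= gam + sg / 2)).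
      { intro Hc2. apply (cross_lemma F dF w w1 T k (gam + sg / 2) (gam + sg) Hk ltac:(lra)); auto.
        intros; apply HdF; lra. intros; apply Hd1; lra.
        intros t Ht Hwt. apply HA. auto. split. lra. apply Hw. lra. }
      apply (eventually_not (fun t => w t <= gam + sg / 2)) in Hn. destruct Hn as [T2 HT2].
      apply (stay_lemma F dF w T KF (k * ((gam + sg / 2) * (k0 * Rpower (gam + sg / 2) (p - 1) - Bc))) (gam + sg / 2) M).
      apply Rmult_lt_0_compat; [lra | apply Rmult_lt_0_compat; lra].
      intros; apply HdF; lra. intros; apply HKF; lra.
      intros t Ht Hwt. specialize (HB' t Ht Hwt). lra.
      exists (Rmin T2 T0). intros t Ht. pose proof (Rmin_l T2 T0). pose proof (Rmin_r T2 T0).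
      specialize (HT2 t ltac:(lra)). split. lra. apply Hw. lra.
    - apply (eventually_not (fun t => gam + sg <= w t)) in Hc1. destruct Hc1 as [Tu HTu].
      exists Tu. intros t Ht. specialize (HTu t Ht). lra. }
  assert (Hlo : exists Tl, forall t, t <= Tl -> gam - sg < w t).
  { destruct (classic (forall T, exists t, t <= T /\ w t <= gam - sg)) as [Hc1|Hc1].
    - exfalso. destruct (BandLow (gam - sg) (gam - sg / 2)) as [T [HT [k [Hk [HA _]]]]]. lra. lra. lra.
      assert (Hn : ~ (forall T', exists t, t <= T' /\ gam - sg / 2 <= w t)).
      { intro Hc2. apply (cross_lemma F dF w w1 T k (gam - sg) (gam - sg / 2) Hk ltac:(lra)); auto.
        intros; apply HdF; lra. intros; apply Hd1; lra. }
      apply (eventually_not (fun t => gam - sg / 2 <= w t)) in Hn. destruct Hn as [T2 HT2].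
      destruct (BandLow s0 (gam - sg / 2)) as [T3 [HT3 [k3 [Hk3 [_ HB3]]]]]. unfold s0; lra. unfold s0; lra. lra.
      destruct (Vp_low Bc k0 p gam s0 (gam - sg / 2) (gam - sg / 2) Hk0 Hp HgB ltac:(unfold s0; lra) ltac:(unfold s0; lra) ltac:(lra) ltac:(lra)) as [Hm _].
      apply (stay_lemma F dF w T3 KF (k3 * (s0 * (Bc - k0 * Rpower (gam - sg / 2) (p - 1)))) s0 (gam - sg / 2)).
      apply Rmult_lt_0_compat; [lra | apply Rmult_lt_0_compat; unfold s0; lra].
      intros; apply HdF; lra. intros; apply HKF; lra.
      intros t Ht Hwt. specialize (HB3 t Ht Hwt). lra.
      exists (Rmin T2 Ta). intros t Ht. pose proof (Rmin_l T2 Ta). pose proof (Rmin_r T2 Ta).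
      specialize (HT2 t ltac:(lra)). specialize (HTa t ltac:(lra)). split; lra.
    - apply (eventually_not (fun t => w t <= gam - sg)) in Hc1. destruct Hc1 as [Tl HTl].
      exists Tl. intros t Ht. specialize (HTl t Ht). lra. }
  destruct Hup as [Tu HTu]. destruct Hlo as [Tl HTl].
  exists (Rmin Tu Tl). intros t Ht. pose proof (Rmin_l Tu Tl). pose proof (Rmin_r Tu Tl).
  specialize (HTu t ltac:(lra)). specialize (HTl t ltac:(lra)).
  apply Rabs_def1; lra.
Qed.

Lemma lub_finite (w : R -> R) t1 T : Rbar_lt (Finite 0) (limsup_minfty w t1) -> T < t1 ->
  exists u, Lub_Rbar (fun z => exists t, t < T /\ z = w t) = Finite u /\
    (forall t, t < T -> w t <= u) /\ Rbar_le (limsup_minfty w t1) (Finite u).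
Proof.
  intros H0 HT. unfold limsup_minfty in *.
  set (E := fun y : R => exists T, T < t1 /\ y = Lub_Rbar (fun z => exists t, t < T /\ z = w t)) in *.
  destruct (Glb_Rbar_correct E) as [Hlb _].
  destruct (Lub_Rbar_correct (fun z => exists t, t < T /\ z = w t)) as [Hub1 _].
  destruct (Lub_Rbar (fun z => exists t, t < T /\ z = w t)) as [u| |] eqn:Hu.
  - exists u. split. reflexivity. split.
    + intros t Ht. specialize (Hub1 (w t) (ex_intro _ t (conj Ht eq_refl))). simpl in Hub1. exact Hub1.
    + apply Hlb. exists T. split. exact HT. rewrite Hu. reflexivity.
  - exfalso. assert (E 0). { exists T. split. exact HT. rewrite Hu. reflexivity. }
    specialize (Hlb 0 H). revert H0 Hlb. generalize (Glb_Rbar E). intros r H0 Hlb. destruct r; simpl in *; try lra; contradiction.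
  - assert (HT1 : T - 1 < T) by lra.
    specialize (Hub1 (w (T - 1)) (ex_intro (fun t => t < T /\ w (T - 1) = w t) (T - 1) (conj HT1 eq_refl))). simpl in Hub1. contradiction.
Qed.

Lemma limsup_upper (w : R -> R) t1 : Rbar_lt (Finite 0) (limsup_minfty w t1) ->
  exists T M, T < t1 /\ 0 < M /\ forall t, t < T -> w t <= M.
Proof.
  intros H0. destruct (lub_finite w t1 (t1 - 1) H0 ltac:(lra)) as [u [_ [Hu _]]].
  exists (t1 - 1), (Rmax u 1). split. lra. split. pose proof (Rmax_r u 1). lra.
  intros t Ht. specialize (Hu t Ht). pose proof (Rmax_l u 1). lra.
Qed.

Lemma limsup_lower (w : R -> R) t1 : Rbar_lt (Finite 0) (limsup_minfty w t1) ->
  Rbar_lt (limsup_minfty w t1) p_infty ->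
  exists lam, 0 < lam /\ forall T, exists t, t <= T /\ t < t1 /\ lam < w t.
Proof.
  intros H0 Hl.
  destruct (limsup_minfty w t1) as [l0| |] eqn:Hg; simpl in H0, Hl; try contradiction.
  exists (l0 / 2). split. lra. intros T.
  set (T' := Rmin T (t1 - 1)).
  assert (HT1 : T' <= T) by apply Rmin_l. assert (HT2 : T' <= t1 - 1) by apply Rmin_r.
  apply NNPP. intro Hn.
  destruct (lub_finite w t1 T') as [u [Hu [Hwu Hle]]]. rewrite Hg. simpl. lra. lra.
  rewrite Hg in Hle. simpl in Hle.
  destruct (Lub_Rbar_correct (fun z => exists t, t < T' /\ z = w t)) as [_ Hlub].
  assert (Hub : is_ub_Rbar (fun z => exists t, t < T' /\ z = w t) (l0 / 2)).
  { intros z [t [Ht Hz]]. subst z. simpl. apply Rnot_lt_le. intro h. apply Hn.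
    exists t. repeat split; lra. }
  specialize (Hlub _ Hub). rewrite Hu in Hlub. simpl in Hlub. lra.
Qed.

Lemma Lfun_eq K alpha t : Lfun K alpha t = K (exp t) / Rpower (exp t) alpha.
Proof.
  unfold Lfun, Rpower. rewrite ln_exp. replace (- alpha * t) with (- (alpha * t)) by ring.
  rewrite exp_Ropp. unfold Rdiv. ring.
Qed.

Lemma exp_small k y : 0 < k -> 0 < y -> forall t, t <= ln y / k -> exp (k * t) <= y.
Proof.
  intros Hk Hy t Ht. rewrite <- (exp_ln y Hy).
  assert (k * t <= ln y).
  { apply (Rmult_le_compat_l k) in Ht; [|lra]. replace (k * (ln y / k)) with (ln y) in Ht by (field; lra). lra. }
  destruct (Rle_lt_or_eq_dec _ _ H) as [h|h]. left. apply exp_increasing. exact h. rewrite h. lra.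
Qed.

Lemma exp_lt_of t d : 0 < d -> t <= ln d - 1 -> exp t < d.
Proof.
  intros Hd Ht. rewrite <- (exp_ln d Hd). apply exp_increasing. lra.
Qed.

Lemma eps_small (K f w : R -> R) (alpha k0 nu p mu M T0 : R) :
  0 < M -> 0 <= mu -> 1 < p -> 0 < 2 + (2 + alpha) / (p - 1) + nu ->
  (forall t, t <= T0 -> 0 < w t <= M) ->
  filterlim (fun r => K r / Rpower r alpha) (at_right 0) (locally k0) ->
  (exists C delta, 0 < delta /\ forall r, 0 < r < delta -> Rabs (f r) <= C * Rpower r nu) ->
  forall d, 0 < d -> exists T, forall t, t <= T ->
    Rabs ((k0 - Lfun K alpha t) * Rpower (w t) p - mu * gfun f alpha p t) <= d.
Proof.
  intros HM Hmu Hp Hkap Hw HKlim [C [delta [Hdelta HfO]]] d Hd.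
  set (eta1 := d / (2 * (Rpower M p + 1))).
  assert (HMp : 0 < Rpower M p) by apply Rpower_pos'.
  assert (Heta1 : 0 < eta1) by (unfold eta1; apply Rdiv_lt_0_compat; lra).
  assert (Hl : locally k0 (fun y => Rabs (y - k0) < eta1)).
  { exists (mkposreal eta1 Heta1). intros y Hy. exact Hy. }
  destruct (HKlim _ Hl) as [d1 Hd1].
  set (kap := 2 + (2 + alpha) / (p - 1) + nu).
  set (y := d / (2 * (mu * Rabs C + 1))).
  assert (HC0 : 0 <= Rabs C) by apply Rabs_pos.
  assert (Hy : 0 < y) by (unfold y; apply Rdiv_lt_0_compat; nra).
  set (T := Rmin (Rmin T0 (ln d1 - 1)) (Rmin (ln delta - 1) (ln y / kap))).
  exists T. intros t Ht.
  assert (HT0 : t <= T0) by (unfold T in Ht; pose proof (Rmin_l (Rmin T0 (ln d1 - 1)) (Rmin (ln delta - 1) (ln y / kap))); pose proof (Rmin_l T0 (ln d1 - 1)); lra).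
  assert (HT1 : t <= ln d1 - 1) by (unfold T in Ht; pose proof (Rmin_l (Rmin T0 (ln d1 - 1)) (Rmin (ln delta - 1) (ln y / kap))); pose proof (Rmin_r T0 (ln d1 - 1)); lra).
  assert (HT2 : t <= ln delta - 1) by (unfold T in Ht; pose proof (Rmin_r (Rmin T0 (ln d1 - 1)) (Rmin (ln delta - 1) (ln y / kap))); pose proof (Rmin_l (ln delta - 1) (ln y / kap)); lra).
  assert (HT3 : t <= ln y / kap) by (unfold T in Ht; pose proof (Rmin_r (Rmin T0 (ln d1 - 1)) (Rmin (ln delta - 1) (ln y / kap))); pose proof (Rmin_r (ln delta - 1) (ln y / kap)); lra).
  assert (Het : 0 < exp t) by apply exp_pos.
  assert (HK : Rabs (Lfun K alpha t - k0) < eta1).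
  { rewrite Lfun_eq. apply Hd1. 2: exact Het.
    pose proof (exp_lt_of t d1 (cond_pos d1) HT1).
    change (Rabs (exp t - 0) < d1). rewrite Rminus_0_r, Rabs_right; lra. }
  assert (Hg : Rabs (gfun f alpha p t) <= Rabs C * y).
  { unfold gfun. rewrite Rabs_mult, (Rabs_right (exp _)) by (left; apply exp_pos).
    pose proof (exp_lt_of t delta Hdelta HT2).
    specialize (HfO (exp t) ltac:(lra)).
    assert (Rpower (exp t) nu = exp (nu * t)) by (unfold Rpower; rewrite ln_exp; reflexivity).
    rewrite H0 in HfO.
    assert (HfO' : Rabs (f (exp t)) <= Rabs C * exp (nu * t)).
    { apply Rle_trans with (C * exp (nu * t)). exact HfO. apply Rmult_le_compat_r. left; apply exp_pos. apply Rle_abs. }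
    assert (exp ((2 + (2 + alpha) / (p - 1)) * t) * exp (nu * t) = exp (kap * t)).
    { rewrite <- exp_plus. f_equal. unfold kap. ring. }
    pose proof (exp_small kap y Hkap Hy t HT3).
    assert (0 < exp ((2 + (2 + alpha) / (p - 1)) * t)) by apply exp_pos.
    apply Rle_trans with (exp ((2 + (2 + alpha) / (p - 1)) * t) * (Rabs C * exp (nu * t))).
    apply Rmult_le_compat_l; lra.
    replace (exp ((2 + (2 + alpha) / (p - 1)) * t) * (Rabs C * exp (nu * t))) with (Rabs C * exp (kap * t)) by (rewrite <- H1; ring).
    apply Rmult_le_compat_l; lra. }
  specialize (Hw t HT0).
  assert (Hwp : Rpower (w t) p <= Rpower M p) by (apply Rle_Rpower_l; try lra).
  rewrite Rabs_minus_sym in HK.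
  assert (A1 : Rabs ((k0 - Lfun K alpha t) * Rpower (w t) p) <= eta1 * Rpower M p).
  { rewrite Rabs_mult. rewrite (Rabs_right (Rpower (w t) p)) by (left; apply Rpower_pos').
    apply Rmult_le_compat; try lra. apply Rabs_pos. left; apply Rpower_pos'. }
  assert (A2 : eta1 * Rpower M p <= d / 2).
  { unfold eta1. apply (Rmult_le_reg_r (2 * (Rpower M p + 1))). lra.
    replace (d / (2 * (Rpower M p + 1)) * Rpower M p * (2 * (Rpower M p + 1))) with (d * Rpower M p) by (field; lra).
    nra. }
  assert (A3 : Rabs (mu * gfun f alpha p t) <= d / 2).
  { rewrite Rabs_mult, (Rabs_right mu) by lra.
    apply Rle_trans with (mu * (Rabs C * y)). apply Rmult_le_compat_l; lra.
    unfold y. apply (Rmult_le_reg_r (2 * (mu * Rabs C + 1))). nra.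
    replace (mu * (Rabs C * (d / (2 * (mu * Rabs C + 1)))) * (2 * (mu * Rabs C + 1))) with (mu * Rabs C * d) by (field; nra).
    nra. }
  pose proof (Rabs_triang ((k0 - Lfun K alpha t) * Rpower (w t) p) (- (mu * gfun f alpha p t))) as Htri.
  rewrite Rabs_Ropp in Htri.
  replace ((k0 - Lfun K alpha t) * Rpower (w t) p - mu * gfun f alpha p t) with ((k0 - Lfun K alpha t) * Rpower (w t) p + - (mu * gfun f alpha p t)) by ring.
  lra.
Qed.

Theorem lemma2p2
  (N : nat) (mu : R) (K f : R -> R) (alpha k0 nu p t1 : R) (w : R -> R)
  (HN : (3 <= N)%nat)
  (Hmu : 0 <= mu)
  (* (K0) *)
  (HKpos : forall r, 0 < r -> 0 < K r)
  (HKcont : forall r, 0 < r -> continuous K r)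
  (Halpha : -2 < alpha) (Hk0 : 0 < k0)
  (HKlim : filterlim (fun r => K r / Rpower r alpha) (at_right 0) (locally k0))
  (* (F0) *)
  (Hfnn : forall r, 0 < r -> 0 <= f r)
  (Hfcont : forall r, 0 < r -> continuous f r)
  (Hfnz : exists r, 0 < r /\ f r <> 0)
  (Hnu : -2 < nu)
  (HfO : exists C delta, 0 < delta /\
           forall r, 0 < r < delta -> Rabs (f r) <= C * Rpower r nu)
  (* supercritical exponent *)
  (Hp : pS N alpha < p)
  (* w in C^2(-oo, t1), positive solution *)
  (Hw1 : forall t, t < t1 -> ex_derive w t)
  (Hw2 : forall t, t < t1 -> ex_derive (Derive w) t)
  (Hw2c : forall t, t < t1 -> continuous (Derive (Derive w)) t)
  (Hwpos : forall t, t < t1 -> 0 < w t)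
  (Heq : forall t, t < t1 ->
      Derive (Derive w) t + acoef N alpha p * Derive w t
      - Rpower (Acoef N alpha p) (p - 1) * w t
      + Lfun K alpha t * Rpower (w t) p + mu * gfun f alpha p t = 0)
  (Hlimsup : Rbar_lt (Finite 0) (limsup_minfty w t1) /\
             Rbar_lt (limsup_minfty w t1) p_infty) :
  is_lim w m_infty (gammacoef N alpha p k0).
Proof.
  destruct Hlimsup as [Hl0 Hl1].
  assert (HN3 : 3 <= INR N) by (replace 3 with (INR 3) by (simpl; ring); apply le_INR; exact HN).
  assert (Hp1 : 1 < p).
  { unfold pS in Hp. assert (h : (INR N + 2 + 2 * alpha) / (INR N - 2) > 1).
    { apply (Rmult_lt_reg_r (INR N - 2)). lra. unfold Rdiv. rewrite Rmult_assoc, Rinv_l by lra. lra. }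
    lra. }
  assert (HpN : INR N + 2 + 2 * alpha < p * (INR N - 2)).
  { unfold pS in Hp. apply (Rmult_lt_compat_r (INR N - 2)) in Hp; [|lra].
    unfold Rdiv in Hp. rewrite Rmult_assoc, Rinv_l in Hp by lra. lra. }
  set (th := theta alpha p).
  assert (Hth : 0 < th) by (unfold th, theta; apply Rdiv_lt_0_compat; lra).
  set (a := acoef N alpha p).
  assert (Ha : 0 < a).
  { unfold a, acoef. fold th. unfold th, theta.
    apply (Rmult_lt_reg_r (p - 1)). lra.
    replace ((INR N - 2 - 2 * ((2 + alpha) / (p - 1))) * (p - 1)) with ((INR N - 2) * (p - 1) - 2 * (2 + alpha)) by (field; lra).
    nra. }
  set (Bc := Rpower (Acoef N alpha p) (p - 1)).
  assert (HB : 0 < Bc) by apply Rpower_pos'.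
  set (gam := gammacoef N alpha p k0).
  assert (HA : 0 < Acoef N alpha p) by (unfold Acoef; apply Rpower_pos').
  assert (Hg : 0 < gam) by (unfold gam, gammacoef; apply Rmult_lt_0_compat; [apply Rpower_pos' | exact HA]).
  assert (HgB : k0 * Rpower gam (p - 1) = Bc).
  { unfold gam, gammacoef. rewrite <- Rpower_mult_distr by (try apply Rpower_pos'; exact HA).
    rewrite Rpower_mult. replace (- (1 / (p - 1)) * (p - 1)) with (- (1)) by (field; lra).
    rewrite Rpower_Ropp, Rpower_1 by lra. fold Bc. field. lra. }
  destruct (limsup_upper w t1 Hl0) as [Tm [M [HTm [HM HwM]]]].
  destruct (limsup_lower w t1 Hl0 Hl1) as [lam [Hlam Hlamw]].
  set (T0 := Tm - 1).
  set (eps := fun t => (k0 - Lfun K alpha t) * Rpower (w t) p - mu * gfun f alpha p t).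
  assert (Hw : forall t, t <= T0 -> 0 < w t <= M).
  { intros t Ht. split. apply Hwpos. unfold T0 in Ht; lra. apply HwM. unfold T0 in Ht; lra. }
  assert (S : setup a Bc k0 p gam M w (Derive w) (Derive (Derive w)) eps T0).
  { constructor; auto.
    - intros t Ht. apply Derive_correct. apply Hw1. unfold T0 in Ht; lra.
    - intros t Ht. apply Derive_correct. apply Hw2. unfold T0 in Ht; lra.
    - intros t Ht. specialize (Heq t ltac:(unfold T0 in Ht; lra)). fold a Bc in Heq.
      unfold eps. lra.
    - apply (eps_small K f w alpha k0 nu p mu M T0 HM Hmu Hp1); auto.
      fold th. unfold theta in th. fold th. lra. }
  apply is_lim_spec. intros e. simpl.
  destruct (core a Bc k0 p gam M w (Derive w) (Derive (Derive w)) eps T0 S) with (sig := pos e) as [T HT].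
  { exists lam. split. exact Hlam. intros T'. destruct (Hlamw T') as [t [Ht1 [Ht2 Ht3]]]. exists t. auto. }
  apply cond_pos.
  exists T. intros x Hx. apply HT. lra.
Qed.
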